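(* Let $(\mathsf K,\mathsf D)$ be a differential ring and $u\in\mathsf K$. For every integer $m\ge0$, in the Ore algebra $\mathsf K\langle\mathsf D\rangle$, $$(\mathsf D+u)^m=\sum_{j=0}^m\binom mj P_{m-j}(u)\,\mathsf D^j.$$
   Context: $(\mathsf K,\mathsf D)$: unital associative (possibly noncommutative) ring with derivation $\mathsf D$. $\mathsf K\langle\mathsf D\rangle$: Ore algebra with coefficients on the left and $\mathsf D a=a\mathsf D+\mathsf D(a)$. The noncommutative Bell polynomials are $P_0(u)=1$, $P_{m+1}(u)=\mathsf D(P_m(u))+u\,P_m(u)$. *)

(* Defs.v *)
From HB Require Import structures.
From mathcomp Require Import all_boot all_order all_algebra.
Set Implicit Arguments. Unset Strict Implicit. Unset Printing Implicit Defensive.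
Import GRing.Theory.
Local Open Scope ring_scope.

Definition is_derivation (K : nzRingType) (D : {additive K -> K}) : Prop :=
  forall a b : K, D (a * b) = D a * b + a * D b.

(* The Ore algebra K<D>: its elements are the operators sum_i a_i D^i with
   coefficients on the left, represented (as an additive group) by {poly K},
   the indeterminate 'X standing for D. *)

(* Left multiplication by D, from the relation D b = b D + D(b):
   D * (sum_j b_j D^j) = sum_j (b_j D^(j+1) + D(b_j) D^j). *)
Definition ore_Dmul (K : nzRingType) (D : {additive K -> K}) (q : {poly K})
  : {poly K} := q * 'X + map_poly D q.

Definition ore_mul (K : nzRingType) (D : {additive K -> K}) (p q : {poly K})
  : {poly K} := \sum_(i < size p) p`_i *: iter i (ore_Dmul D) q.

Definition ore_exp (K : nzRingType) (D : {additive K -> K}) (p : {poly K})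
  (m : nat) : {poly K} := iter m (ore_mul D p) 1.

Fixpoint bellP (K : nzRingType) (D : {additive K -> K}) (u : K) (m : nat) : K :=
  match m with
  | 0 => 1
  | m'.+1 => D (bellP D u m') + u * bellP D u m'
  end.

(* Main.v *)
Require Import Defs.
From mathcomp Require Import all_boot all_order all_algebra.
Import GRing.Theory.
Local Open Scope ring_scope.

Lemma coefS (K : nzRingType) (D : {additive K -> K}) (u : K) (m j : nat) :
  (\sum_(i < m.+1) (bellP D u (m - i) *+ 'C(m, i)) *: 'X^i)`_j
  = bellP D u (m - j) *+ 'C(m, j).
Proof.
rewrite -(poly_def m.+1 (fun i => bellP D u (m - i) *+ 'C(m, i))) coef_poly.
case: ltnP => // H; by rewrite bin_small // mulr0n.
Qed.

Theorem mainTheorem4 (K : nzRingType) (D : {additive K -> K})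
  (hD : is_derivation D) (u : K) (m : nat) :
  ore_exp D ('X + u%:P) m =
  \sum_(j < m.+1) (bellP D u (m - j) *+ 'C(m, j)) *: 'X^j.
Proof.
elim: m => [|m IH].
  rewrite /ore_exp /= big_ord1 /= expr0 mulr1n; by rewrite alg_polyC.
rewrite /ore_exp iterS -/(ore_exp D ('X + u%:P) m) IH /ore_mul size_XaddC.
rewrite big_ord_recr big_ord1 /=.
rewrite !coefD coefX coefC /= add0r coefX coefC /= addr0 /ore_Dmul.
apply/polyP => j.
rewrite scale1r !coefD coefZ coefMX coef_map /= !coefS.
case: j => [|j] /=.
  by rewrite !subn0 !bin0 !mulr1n add0r addrC.
rewrite subSS binS mulrnDr.
case: (ltnP j m) => Hj.
  have -> : (m - j = (m - j.+1).+1)%N by rewrite subnSK.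
  rewrite /= raddfMn /=.
  rewrite mulrnAr !mulrnDl.
  set a := _ *+ 'C(m, j.+1). set b := _ *+ 'C(m, j.+1). set c := _ *+ 'C(m, j).
  set d := c + _.
  by rewrite (addrC d b) addrA (addrC a b).
by rewrite (bin_small (n:=m) (m:=j.+1)) ?ltnS // !mulr0n raddf0 mulr0 !add0r addr0.
Qed.
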